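(* Let $\Gamma,\Delta$ be finite sets of formulas, $\alpha$ an atomic mapping for $\Gamma\cup\Delta$, and $\mathcal{U}$ the simulation base for $\Gamma\cup\Delta$ and $\alpha$. Let $\Theta_{\mathsf{At}}$ be any (possibly empty) finite set of atoms, $\Sigma$ any non-empty finite set of subformulas of formulas in $\Gamma\cup\Delta$, and $\Sigma_{\mathsf{At}}=\{p^B\mid B\in\Sigma\}$. Then for every base $\mathcal{B}\supseteq\mathcal{U}_{\mathcal{ST}}$: $\Vdash_{\mathcal{B}}\Sigma,\Theta_{\mathsf{At}}$ if and only if $\vdash_{\mathcal{B}}\ \Rightarrow\Sigma_{\mathsf{At}},\Theta_{\mathsf{At}}$.
   Context: Fix a countably infinite set $\mathsf{At}$ of atoms. Formulas are built from atoms and the constant $\bot$ using the binary connectives $\land,\lor,\to$. All contexts are finite sets (not multisets) of formulas; a comma denotes union; a subscript $\mathsf{At}$ indicates a finite set of atoms. An atomic sequent has the form $\Gamma_{\mathsf{At}} \Rightarrow \Delta_{\mathsf{At}}$. An atomic rule has finitely many (possibly zero) atomic sequents as premises and one atomic sequent as conclusion; a rule with zero premises is an atomic axiom. A base is a (possibly empty) set of atomic rules; $\mathcal{C}\supseteq\mathcal{B}$ ($\mathcal{C}$ extends $\mathcal{B}$) if $\mathcal{C}$ contains every rule of $\mathcal{B}$. Derivability $\vdash_{\mathcal{B}}$ of atomic sequents is the least relation such that: (Axiom/Weakening) if an atomic axiom with conclusion $\Gamma_{\mathsf{At}}\Rightarrow\Delta_{\mathsf{At}}$ is in $\mathcal{B}$,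 then $\vdash_{\mathcal{B}} \Theta_{\mathsf{At}},\Gamma_{\mathsf{At}}\Rightarrow\Delta_{\mathsf{At}},\Sigma_{\mathsf{At}}$ for all sets of atoms $\Theta_{\mathsf{At}},\Sigma_{\mathsf{At}}$; (Mix) if a rule with premises $\Gamma^i_{\mathsf{At}}\Rightarrow\Delta^i_{\mathsf{At}}$ ($1\le i\le n$) and conclusion $\Gamma_{\mathsf{At}}\Rightarrow\Delta_{\mathsf{At}}$ is in $\mathcal{B}$ and $\vdash_{\mathcal{B}} \Theta^i_{\mathsf{At}},\Gamma^i_{\mathsf{At}}\Rightarrow\Delta^i_{\mathsf{At}},\Sigma^i_{\mathsf{At}}$ for each $i$, then $\vdash_{\mathcal{B}} \Theta^1_{\mathsf{At}},\dots,\Theta^n_{\mathsf{At}},\Gamma_{\mathsf{At}}\Rightarrow\Delta_{\mathsf{At}},\Sigma^1_{\mathsf{At}},\dots,\Sigma^n_{\mathsf{At}}$. Support $\Vdash_{\mathcal{B}}$: (At) $\Vdash_{\mathcal{B}}\Gamma_{\mathsf{At}}$ iff $\vdash_{\mathcal{B}}\ \Rightarrow\Gamma_{\mathsf{At}}$; ($\land$) $\Vdash_{\mathcal{B}} A\land B,\Gamma$ iff $\Vdash_{\mathcal{B}}A,\Gamma$ and $\Vdash_{\mathcal{B}}B,\Gamma$; ($\lor$) $\Vdash_{\mathcal{B}}A\lor B,\Gamma$ iff $\Vdash_{\mathcal{B}}A,B,\Gamma$; ($\to$) $\Vdash_{\mathcal{B}}A\to B,\Gamma$ iff $A\Vdash_{\mathcal{B}}B,\Gamma$;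 ($\bot$) $\Vdash_{\mathcal{B}}\bot,\Gamma$ iff $\Vdash_{\mathcal{B}}\Gamma$; (Inf) for $n\ge1$, $\{A^1,\dots,A^n\}\Vdash_{\mathcal{B}}\Delta$ iff for every $\mathcal{C}\supseteq\mathcal{B}$ and all sets of atoms $\Theta^1_{\mathsf{At}},\dots,\Theta^n_{\mathsf{At}}$, if $\Vdash_{\mathcal{C}}\Theta^i_{\mathsf{At}},A^i$ for all $i$ then $\Vdash_{\mathcal{C}}\Theta^1_{\mathsf{At}},\dots,\Theta^n_{\mathsf{At}},\Delta$ (and $\varnothing\Vdash_{\mathcal{B}}\Delta$ means $\Vdash_{\mathcal{B}}\Delta$). The atomic identity rule $\mathsf{Ainit}$ is the atomic axiom $\Gamma_{\mathsf{At}},p\Rightarrow p,\Delta_{\mathsf{At}}$; the atomic cut rule $\mathsf{Acut}$ has premises $\Gamma^1_{\mathsf{At}}\Rightarrow\Delta^1_{\mathsf{At}},p$ and $p,\Gamma^2_{\mathsf{At}}\Rightarrow\Delta^2_{\mathsf{At}}$ and conclusion $\Gamma^1_{\mathsf{At}},\Gamma^2_{\mathsf{At}}\Rightarrow\Delta^1_{\mathsf{At}},\Delta^2_{\mathsf{At}}$. $\mathcal{ST}$ is the base consisting of all instances of $\mathsf{Ainit}$ and $\mathsf{Acut}$. Atomic mapping: for a set of formulas $\Sigma_0$ with set of subformulas $S$, an atomic mapping is an injective function $\alpha:S\to\mathsf{At}$ with $\alpha(p)=p$ for every atom $p\in S$; write $p^A:=\alpha(A)$ (so $p^p=p$ for atoms).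 The simulation base $\mathcal{U}$ for $\Sigma_0$ and $\alpha$ consists exactly of the following atomic rules, for all formulas $A,B$ such that the displayed compound formula lies in $S$ (and for $p^\bot$ when $\bot\in S$), and all sets of atoms $\Gamma_{\mathsf{At}},\Delta_{\mathsf{At}},\Gamma'_{\mathsf{At}},\Delta'_{\mathsf{At}}$ (write $\Gamma,\Delta,\Gamma',\Delta'$ for these): $L\land$: from $p^A,p^B,\Gamma\Rightarrow\Delta$ infer $p^{A\land B},\Gamma\Rightarrow\Delta$; $R\land$: from $\Gamma\Rightarrow\Delta,p^A$ and $\Gamma'\Rightarrow\Delta',p^B$ infer $\Gamma,\Gamma'\Rightarrow\Delta,\Delta',p^{A\land B}$; $L\lor$: from $p^A,\Gamma\Rightarrow\Delta$ and $p^B,\Gamma'\Rightarrow\Delta'$ infer $p^{A\lor B},\Gamma,\Gamma'\Rightarrow\Delta,\Delta'$; $R\lor$: from $\Gamma\Rightarrow\Delta,p^A,p^B$ infer $\Gamma\Rightarrow\Delta,p^{A\lor B}$; $L\to$: from $\Gamma\Rightarrow\Delta,p^A$ and $p^B,\Gamma'\Rightarrow\Delta'$ infer $p^{A\to B},\Gamma,\Gamma'\Rightarrow\Delta,\Delta'$; $R\to$: from $p^A,\Gamma\Rightarrow\Delta,p^B$ infer $\Gamma\Rightarrow\Delta,p^{A\to B}$; $R\bot$: from $\Gamma\Rightarrow\Delta$ infer $\Gamma\Rightarrow\Delta,p^\bot$; $L\bot$: axiom $\Gamma,p^\bot\Rightarrow\Delta$. Put $\mathcal{U}_{\mathcal{ST}}:=\mathcal{U}\cup\mathcal{ST}$.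 *)

(* Defs.v *)
From HB Require Import structures.
From mathcomp Require Import all_boot.
From mathcomp Require Import finmap.

Set Implicit Arguments.
Unset Strict Implicit.
Unset Printing Implicit Defensive.

Local Open Scope fset_scope.

Definition atom := nat.

Inductive form : Type :=
| Atom of atom
| Bot
| And of form & form
| Or of form & form
| Imp of form & form.

Definition form_eq_dec : forall x y : form, {x = y} + {x <> y}.
Proof. decide equality; exact: (decP eqP). Defined.

HB.instance Definition _ := hasDecEq.Build form (compareP form_eq_dec).

Fixpoint subformulas (A : form) : seq form :=
  match A with
  | Atom _ | Bot => [:: A]
  | And B C | Or B C | Imp B C => A :: subformulas B ++ subformulas C
  end.

Definition subformulas_of (G : seq form) : seq form :=
  flatten (map subformulas G).

(* Atomic sequents: pairs of finite sets of atoms (antecedent, succedent). *)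
Definition sequent := ({fset atom} * {fset atom})%type.

Record rule := mkRule { premises : seq sequent; conclusion : sequent }.

Definition base := rule -> Prop.

Definition extends (B C : base) : Prop := forall r, B r -> C r.

Definition bigU (s : seq {fset atom}) : {fset atom} := \bigcup_(t <- s) t.

Inductive derivable (B : base) : sequent -> Prop :=
| der_ax (r : rule) (G D Th Si : {fset atom}) :
    B r -> premises r = [::] -> conclusion r = (G, D) ->
    derivable B (Th `|` G, D `|` Si)
| der_mix (r : rule) (G D : {fset atom}) (ths sis : seq {fset atom}) :
    B r -> conclusion r = (G, D) ->
    size ths = size (premises r) -> size sis = size (premises r) ->
    (forall i, i < size (premises r) ->
       derivable B (nth fset0 ths i `|` (nth (fset0, fset0) (premises r) i).1,
                    (nth (fset0, fset0) (premises r) i).2 `|` nth fset0 sis i)) ->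
    derivable B (bigU ths `|` G, D `|` bigU sis).

(* Size measure used as fuel for the recursive definition of support. *)
Fixpoint fsize (A : form) : nat :=
  match A with
  | Atom _ | Bot => 1
  | And B C | Or B C | Imp B C => (fsize B + fsize C).+1
  end.

Definition lsize (G : seq form) : nat := sumn (map fsize G).

(* supn n B acc G : support of the context G, acc (acc a set of atoms already
   extracted), in base B, with fuel n (fuel lsize G suffices).  Compound
   formulas are decomposed following the clauses (and), (or), (->), (bot);
   atoms are moved into acc; (At) applies when only atoms are left.  The
   (->) clause unfolds (Inf) with n = 1. *)
Fixpoint supn (n : nat) (B : base) (acc : {fset atom}) (G : seq form) {struct n}
  : Prop :=
  match G with
  | [::] => derivable B (fset0, acc)
  | A :: G' =>
    match n with
    | 0 => False
    | n'.+1 =>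
      match A with
      | Atom p => supn n' B (p |` acc) G'
      | Bot => supn n' B acc G'
      | And A1 A2 => supn n' B acc (A1 :: G') /\ supn n' B acc (A2 :: G')
      | Or A1 A2 => supn n' B acc (A1 :: A2 :: G')
      | Imp A1 A2 =>
          forall C : base, extends B C ->
          forall Th : {fset atom}, supn n' C Th [:: A1] ->
          supn n' C (Th `|` acc) (A2 :: G')
      end
    end
  end.

Definition supports (B : base) (Th : {fset atom}) (G : seq form) : Prop :=
  supn (lsize G) B Th G.

Definition atomic_mapping (G0 : seq form) (alpha : form -> atom) : Prop :=
  {in subformulas_of G0 &, injective alpha} /\
  (forall p, Atom p \in subformulas_of G0 -> alpha (Atom p) = p).

Inductive sim_base (S : seq form) (alpha : form -> atom) : base :=
| U_Land A B (G D : {fset atom}) : And A B \in S ->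
    sim_base S alpha (mkRule [:: (alpha A |` (alpha B |` G), D)]
                             (alpha (And A B) |` G, D))
| U_Rand A B (G D G' D' : {fset atom}) : And A B \in S ->
    sim_base S alpha (mkRule [:: (G, alpha A |` D); (G', alpha B |` D')]
                             (G `|` G', alpha (And A B) |` (D `|` D')))
| U_Lor A B (G D G' D' : {fset atom}) : Or A B \in S ->
    sim_base S alpha (mkRule [:: (alpha A |` G, D); (alpha B |` G', D')]
                             (alpha (Or A B) |` (G `|` G'), D `|` D'))
| U_Ror A B (G D : {fset atom}) : Or A B \in S ->
    sim_base S alpha (mkRule [:: (G, alpha A |` (alpha B |` D))]
                             (G, alpha (Or A B) |` D))
| U_Limp A B (G D G' D' : {fset atom}) : Imp A B \in S ->
    sim_base S alpha (mkRule [:: (G, alpha A |` D); (alpha B |` G', D')]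
                             (alpha (Imp A B) |` (G `|` G'), D `|` D'))
| U_Rimp A B (G D : {fset atom}) : Imp A B \in S ->
    sim_base S alpha (mkRule [:: (alpha A |` G, alpha B |` D)]
                             (G, alpha (Imp A B) |` D))
| U_Rbot (G D : {fset atom}) : Bot \in S ->
    sim_base S alpha (mkRule [:: (G, D)] (G, alpha Bot |` D))
| U_Lbot (G D : {fset atom}) : Bot \in S ->
    sim_base S alpha (mkRule [::] (alpha Bot |` G, D)).

Inductive ST : base :=
| ST_init (p : atom) (G D : {fset atom}) :
    ST (mkRule [::] (p |` G, p |` D))
| ST_cut (p : atom) (G1 D1 G2 D2 : {fset atom}) :
    ST (mkRule [:: (G1, p |` D1); (p |` G2, D2)] (G1 `|` G2, D1 `|` D2)).

Definition UST (S : seq form) (alpha : form -> atom) : base :=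
  fun r => sim_base S alpha r \/ ST r.

(* Main.v *)
Require Import Defs.
From HB Require Import structures.
From mathcomp Require Import all_boot.
From mathcomp Require Import finmap.
From mathcomp Require Import zify.
Set Implicit Arguments.
Unset Strict Implicit.
Local Open Scope fset_scope.

Ltac fsubgo := (case/orP; [fsubgo|fsubgo]) || (move=> ->; rewrite /= ?orbT //) || done.
Ltac fsub := apply/fsubsetP => ?; rewrite !inE; fsubgo.

Lemma bigU_nseq (X : {fset atom}) n : Defs.bigU (nseq n.+1 X) = X.
Proof.
rewrite /Defs.bigU; elim: n => [|n IH]; first by rewrite big_cons big_nil fsetU0.
by rewrite [nseq _ _]/= big_cons IH fsetUid.
Qed.

Lemma der_sub B G D G' D' : derivable B (G, D) -> G `<=` G' -> D `<=` D' ->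
  derivable B (G', D').
Proof.
move=> H; move: H G' D'.
suff: forall s, derivable B s -> forall G' D', s.1 `<=` G' -> s.2 `<=` D' ->
  derivable B (G', D') by move=> X /X.
move=> s; elim => {s}.
- move=> r G0 D0 Th Si Br Pr Cr G' D' /= HG HD.
  have -> : G' = G' `|` G0 by apply/esym/fsetUidPl; apply: fsubset_trans HG; exact: fsubsetUr.
  have -> : D' = D0 `|` D' by apply/esym/fsetUidPr; apply: fsubset_trans HD; exact: fsubsetUl.
  exact: der_ax Br Pr Cr.
- move=> r G0 D0 ths sis Br Cr Sth Ssi Hp IH G' D' /= HG HD.
  case E: (premises r) => [|p ps].
  + have -> : G' = G' `|` G0 by apply/esym/fsetUidPl; apply: fsubset_trans HG; exact: fsubsetUr.
    have -> : D' = D0 `|` D' by apply/esym/fsetUidPr; apply: fsubset_trans HD; exact: fsubsetUl.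
    exact: der_ax Br E Cr.
  + have HG0 : G0 `<=` G' by apply: fsubset_trans HG; exact: fsubsetUr.
    have HD0 : D0 `<=` D' by apply: fsubset_trans HD; exact: fsubsetUl.
    have := @der_mix B r G0 D0 (nseq (size ps).+1 G') (nseq (size ps).+1 D') Br Cr.
    rewrite !bigU_nseq E !size_nseq => /(_ erefl erefl).
    rewrite (fsetUidPl _ _ HG0) (fsetUidPr _ _ HD0); apply => i Hi.
    rewrite !nth_nseq Hi; rewrite -E in Hi *; apply: (IH i Hi) => /=.
    * apply: fsetSU; apply: fsubset_trans HG; apply: fsubset_trans (fsubsetUl _ G0).
      rewrite /Defs.bigU; apply: (@bigfcup_sup _ _ _ _ xpredT (fun t => t)) => //.
      apply: mem_nth; rewrite Sth //.
    * apply: fsetUS; apply: fsubset_trans HD; apply: fsubset_trans (fsubsetUr D0 _).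
      rewrite /Defs.bigU; apply: (@bigfcup_sup _ _ _ _ xpredT (fun t => t)) => //.
      apply: mem_nth; rewrite Ssi //.
Qed.

Lemma der_base B C s : extends B C -> derivable B s -> derivable C s.
Proof.
move=> HBC; elim => {s}.
- move=> r G D Th Si Br Pr Cr; exact: der_ax (HBC _ Br) Pr Cr.
- move=> r G D ths sis Br Cr S1 S2 _ IH; exact: der_mix (HBC _ Br) Cr S1 S2 IH.
Qed.

Lemma ax0 B r G D : B r -> premises r = [::] -> conclusion r = (G, D) ->
  derivable B (G, D).
Proof. move=> Br Pr Cr; have := der_ax fset0 fset0 Br Pr Cr; by rewrite fset0U fsetU0. Qed.

Lemma mix1 B r p G D : B r -> premises r = [:: p] -> conclusion r = (G, D) ->
  derivable B p -> derivable B (G, D).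
Proof.
move=> Br Pr Cr Hp.
have := @der_mix B r G D [:: fset0] [:: fset0] Br Cr; rewrite Pr.
have E : Defs.bigU [:: fset0] = fset0 by rewrite /Defs.bigU big_cons big_nil fsetU0.
rewrite E fset0U fsetU0; apply => //; case => // _ /=.
clear Pr; by case: p Hp => a b; rewrite fset0U fsetU0.
Qed.

Lemma mix2 B r p1 p2 G D : B r -> premises r = [:: p1; p2] -> conclusion r = (G, D) ->
  derivable B p1 -> derivable B p2 -> derivable B (G, D).
Proof.
move=> Br Pr Cr Hp1 Hp2.
have := @der_mix B r G D [:: fset0; fset0] [:: fset0; fset0] Br Cr; rewrite Pr.
have E : Defs.bigU [:: fset0; fset0] = fset0 by rewrite /Defs.bigU !big_cons big_nil !fsetU0.
rewrite E fset0U fsetU0; apply => //; case => [|[|//]] _ /=.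
- clear Pr; by case: p1 Hp1 => a b; rewrite fset0U fsetU0.
- clear Pr; by case: p2 Hp2 => a b; rewrite fset0U fsetU0.
Qed.

Section STlemmas.
Variable B : base.
Hypothesis HST : forall r, ST r -> B r.

Lemma der_init p G D : derivable B (p |` G, p |` D).
Proof. exact: ax0 (HST (ST_init p G D)) erefl erefl. Qed.

Lemma der_cut p G1 D1 G2 D2 : derivable B (G1, p |` D1) -> derivable B (p |` G2, D2) ->
  derivable B (G1 `|` G2, D1 `|` D2).
Proof. exact: mix2 (HST (ST_cut p G1 D1 G2 D2)) erefl erefl. Qed.

Definition addax (a : atom) : base :=
  fun r => B r \/ r = mkRule [::] (fset0, [fset a]).

Lemma bigU_map_sub a (s : seq {fset atom}) :
  Defs.bigU (map (fsetU [fset a]) s) `<=` a |` Defs.bigU s.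
Proof.
rewrite /Defs.bigU; elim: s => [|t s IH]; first by rewrite !big_nil fsub0set.
rewrite /= !big_cons; apply/fsubsetP => x; rewrite !inE.
case/orP => [/orP [->//|->] | H]; first by rewrite orbT.
by move/fsubsetP: IH => /(_ x H); rewrite !inE; case/orP => ->; rewrite ?orbT.
Qed.

Lemma deduction a G D : derivable (addax a) (G, D) -> derivable B (a |` G, D).
Proof.
suff: forall s, derivable (addax a) s -> derivable B (a |` s.1, s.2) by move=> X /X.
move=> s; elim => {s}.
- move=> r G0 D0 Th Si [Br|->] Pr Cr.
  + apply: der_sub (ax0 Br Pr Cr) _ _; fsub.
  + case: Cr => <- <- /=; apply: der_sub (der_init a fset0 fset0) _ _; fsub.
- move=> r G0 D0 ths sis [Br|Er] Cr S1 S2 _ IH; last first.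
    move: S1 S2 Cr; rewrite Er /= => /size0nil -> /size0nil -> [<- <-].
    apply: der_sub (der_init a fset0 fset0) _ _; rewrite /Defs.bigU big_nil; fsub.
  have := @der_mix B r G0 D0 (map (fsetU [fset a]) ths) sis Br Cr.
  rewrite size_map => /(_ S1 S2) H.
  have {H} H : derivable B (Defs.bigU [seq [fset a] `|` i | i <- ths] `|` G0, D0 `|` Defs.bigU sis).
    apply: H => i Hi; rewrite (nth_map fset0) ?S1 // -fsetUA; exact: IH.
  apply: der_sub H _ _ => //=.
  rewrite fsetUA; apply: fsetSU; exact: bigU_map_sub.
Qed.

End STlemmas.

Lemma fsize_pos A : 0 < Defs.fsize A.
Proof. by case: A. Qed.

Lemma lsize_cons A G : Defs.lsize (A :: G) = (Defs.fsize A + Defs.lsize G)%N.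
Proof. by []. Qed.

Lemma supn_fuel n m B acc G : Defs.lsize G <= n -> Defs.lsize G <= m ->
  (supn n B acc G <-> supn m B acc G).
Proof.
elim: n m B acc G => [|n IH] m B acc [|A G]; rewrite ?lsize_cons.
- by case: m.
- by have := fsize_pos A; lia.
- by case: m.
case: m => [|m]; first by have := fsize_pos A; lia.
move=> Hn Hm; case: A Hn Hm => [p|| A1 A2| A1 A2| A1 A2] /= Hn Hm.
- apply: IH; lia.
- apply: IH; lia.
- rewrite (IH m B acc (A1 :: G)) ?lsize_cons; try lia.
  rewrite (IH m B acc (A2 :: G)) ?lsize_cons; try lia. done.
- apply: IH; rewrite ?lsize_cons /=; lia.
- split => H C HC Th H1.
  + apply/(IH m); rewrite ?lsize_cons; try lia.
    apply: H => //; apply/(IH m) => //; rewrite /Defs.lsize /=; lia.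
  + apply/(IH m); rewrite ?lsize_cons; try lia.
    apply: H => //; apply/(IH m) => //; rewrite /Defs.lsize /=; lia.
Qed.

Lemma supports_nil B Th : supports B Th [::] <-> derivable B (fset0, Th).
Proof. by []. Qed.

Lemma supports_cons B Th A G : supports B Th (A :: G) <->
  match A with
  | Atom p => supports B (p |` Th) G
  | Bot => supports B Th G
  | And A1 A2 => supports B Th (A1 :: G) /\ supports B Th (A2 :: G)
  | Or A1 A2 => supports B Th (A1 :: A2 :: G)
  | Imp A1 A2 =>
      forall C : base, extends B C ->
      forall Th' : {fset atom}, supports C Th' [:: A1] ->
      supports C (Th' `|` Th) (A2 :: G)
  end.
Proof.
rewrite /supports; case E: (Defs.lsize (A :: G)) => [|n].
  by have := fsize_pos A; rewrite lsize_cons in E; lia.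
rewrite lsize_cons in E.
case: A E => [p|| A1 A2| A1 A2| A1 A2] /= E.
- apply: supn_fuel; lia.
- apply: supn_fuel; lia.
- rewrite (supn_fuel _ _ _ (n:=n) (m:=Defs.lsize (A1::G))) ?lsize_cons; try lia.
  rewrite (supn_fuel _ _ _ (n:=n) (m:=Defs.lsize (A2::G))) ?lsize_cons; try lia. done.
- apply: supn_fuel; rewrite ?lsize_cons /=; lia.
- split => H C HC Th' H1.
  + apply/(supn_fuel (n:=n)); rewrite ?lsize_cons; try lia.
    apply: H => //; apply/(supn_fuel (m:=Defs.lsize [:: A1])) => //; rewrite /Defs.lsize /=; lia.
  + apply/(supn_fuel (m:=Defs.lsize (A2 :: G))); rewrite ?lsize_cons; try lia.
    apply: H => //; apply/(supn_fuel (n:=n)) => //; rewrite /Defs.lsize /=; lia.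
Qed.

Lemma sub_self A : A \in subformulas A.
Proof. by case: A => * /=; rewrite inE eqxx. Qed.

Lemma sub_trans x Bf C : x \in subformulas Bf -> Bf \in subformulas C ->
  x \in subformulas C.
Proof.
move=> Hx; elim: C => [p||C1 IH1 C2 IH2|C1 IH1 C2 IH2|C1 IH1 C2 IH2] /=;
  rewrite ?inE ?mem_cat.
- by move/eqP => E; move: Hx; rewrite E /= !inE.
- by move/eqP => E; move: Hx; rewrite E /= !inE.
all: case/orP => [/eqP E|/orP [/IH1 ->|/IH2 ->]]; rewrite ?orbT //;
     by move: Hx; rewrite E /= !inE ?mem_cat.
Qed.

Lemma subof_cl G0 A x : A \in subformulas_of G0 -> x \in subformulas A ->
  x \in subformulas_of G0.
Proof.
rewrite /subformulas_of => /flattenP [s /mapP [Y HY ->] HA] Hx.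
apply/flattenP; exists (subformulas Y); first exact: map_f.
exact: sub_trans Hx HA.
Qed.

Lemma ext_trans B C D : extends B C -> extends C D -> extends B D.
Proof. by move=> H1 H2 r /H1 /H2. Qed.

Section Main.
Variables (S0 : seq form) (alpha : form -> atom).
Hypothesis Hat : forall p, Atom p \in S0 -> alpha (Atom p) = p.
Hypothesis Hcl : forall A x, A \in S0 -> x \in subformulas A -> x \in S0.

Definition am (G : seq form) : {fset atom} := [fset p | p in map alpha G].

Lemma amc A G : am (A :: G) = alpha A |` am G.
Proof. apply/fsetP => x. by rewrite !inE /=. Qed.
Lemma am0 : am [::] = fset0.
Proof. apply/fsetP => x. by rewrite !inE. Qed.

Lemma main n : forall Sg B Th, Defs.lsize Sg <= n -> {subset Sg <= S0} ->
  extends (UST S0 alpha) B ->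
  (supports B Th Sg <-> derivable B (fset0, am Sg `|` Th)).
Proof.
elim: n => [|n IH] [|A G] B Th Hn Hsub HB.
- by rewrite supports_nil am0 fset0U.
- by rewrite lsize_cons in Hn; have := fsize_pos A; lia.
- by rewrite supports_nil am0 fset0U.
have HST : forall r, ST r -> B r by move=> r h; apply: HB; right.
have HU : forall r, sim_base S0 alpha r -> B r by move=> r h; apply: HB; left.
have HA : A \in S0 by apply: Hsub; rewrite inE eqxx.
have HG : {subset G <= S0} by move=> y Hy; apply: Hsub; rewrite inE Hy orbT.
have Hsf : forall x, x \in subformulas A -> x \in S0 by move=> x; apply: Hcl.
rewrite lsize_cons in Hn.
rewrite supports_cons amc -fsetUA.
clear Hsub; case: A Hn HA Hsf => [p||A1 A2|A1 A2|A1 A2] /= Hn HA Hsf.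
- rewrite (Hat HA) (IH G B _ ltac:(lia) HG HB).
  by rewrite fsetUCA.
- rewrite (IH G B _ ltac:(lia) HG HB).
  split => H.
  + exact: @mix1 B _ _ _ _ (HU _ (@U_Rbot S0 alpha fset0 _ HA)) erefl erefl H.
  + have Hb := HU _ (@U_Lbot S0 alpha fset0 fset0 HA).
    have := der_cut HST H (@ax0 B _ _ _ Hb erefl erefl).
    by rewrite ?fsetU0 ?fset0U.
- have H1 : A1 \in S0 by apply: Hsf; rewrite in_cons mem_cat sub_self orbT.
  have H2 : A2 \in S0 by apply: Hsf; rewrite in_cons mem_cat sub_self !orbT.
  have S1 : {subset A1 :: G <= S0} by move=> y; rewrite inE => /orP [/eqP->|/HG].
  have S2 : {subset A2 :: G <= S0} by move=> y; rewrite inE => /orP [/eqP->|/HG].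
  rewrite (IH (A1 :: G) B _ ltac:(rewrite lsize_cons; lia) S1 HB).
  rewrite (IH (A2 :: G) B _ ltac:(rewrite lsize_cons; lia) S2 HB).
  rewrite !amc -!fsetUA.
  split.
  + case=> Ha Hb.
    have := @mix2 B _ _ _ _ _ (HU _ (@U_Rand S0 alpha A1 A2 fset0 (am G `|` Th) fset0 (am G `|` Th) HA)) erefl erefl Ha Hb.
    by rewrite !fsetUid.
  + move=> H; split.
    * have P : derivable B (alpha A1 |` (alpha A2 |` fset0), [fset alpha A1]).
        by apply: der_sub (der_init HST (alpha A1) fset0 fset0) _ _; fsub.
      have Hl := @mix1 B _ _ _ _ (HU _ (@U_Land S0 alpha A1 A2 fset0 [fset alpha A1] HA)) erefl erefl P.
      apply: der_sub (der_cut HST H Hl) _ _; fsub.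
    * have P : derivable B (alpha A1 |` (alpha A2 |` fset0), [fset alpha A2]).
        by apply: der_sub (der_init HST (alpha A2) fset0 fset0) _ _; fsub.
      have Hl := @mix1 B _ _ _ _ (HU _ (@U_Land S0 alpha A1 A2 fset0 [fset alpha A2] HA)) erefl erefl P.
      apply: der_sub (der_cut HST H Hl) _ _; fsub.
- have H1 : A1 \in S0 by apply: Hsf; rewrite in_cons mem_cat sub_self orbT.
  have H2 : A2 \in S0 by apply: Hsf; rewrite in_cons mem_cat sub_self !orbT.
  have S1 : {subset A1 :: A2 :: G <= S0}.
    by move=> y; rewrite !inE => /orP [/eqP->|/orP [/eqP->|/HG]].
  rewrite (IH (A1 :: A2 :: G) B _ ltac:(rewrite !lsize_cons; lia) S1 HB).
  rewrite !amc -!fsetUA.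
  split => H.
  + exact: @mix1 B _ _ _ _ (HU _ (@U_Ror S0 alpha A1 A2 fset0 _ HA)) erefl erefl H.
  + have P1 : derivable B (alpha A1 |` fset0, [fset alpha A1]).
      by apply: der_sub (der_init HST (alpha A1) fset0 fset0) _ _; fsub.
    have P2 : derivable B (alpha A2 |` fset0, [fset alpha A2]).
      by apply: der_sub (der_init HST (alpha A2) fset0 fset0) _ _; fsub.
    have Hl := @mix2 B _ _ _ _ _ (HU _ (@U_Lor S0 alpha A1 A2 fset0 [fset alpha A1] fset0 [fset alpha A2] HA))
       erefl erefl P1 P2.
    apply: der_sub (der_cut HST H Hl) _ _; fsub.
- have H1 : A1 \in S0 by apply: Hsf; rewrite in_cons mem_cat sub_self orbT.
  have H2 : A2 \in S0 by apply: Hsf; rewrite in_cons mem_cat sub_self !orbT.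
  have S1 : {subset [:: A1] <= S0} by move=> y; rewrite inE => /eqP->.
  have S2 : {subset A2 :: G <= S0} by move=> y; rewrite inE => /orP [/eqP->|/HG].
  have IH1 : forall C Th', extends B C ->
      (supports C Th' [:: A1] <-> derivable C (fset0, alpha A1 |` Th')).
    move=> C Th' HC; rewrite (IH [:: A1] C _ ltac:(rewrite /Defs.lsize /=; lia) S1 (ext_trans HB HC)).
    by rewrite amc am0 fsetU0.
  have IH2 : forall C Th', extends B C ->
      (supports C Th' (A2 :: G) <-> derivable C (fset0, alpha A2 |` (am G `|` Th'))).
    move=> C Th' HC; rewrite (IH (A2 :: G) C _ ltac:(rewrite lsize_cons; lia) S2 (ext_trans HB HC)).
    by rewrite amc -fsetUA.
  split => H.
  + pose C := addax B (alpha A1).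
    have HBC : extends B C by move=> r h; left.
    have HC1 : supports C fset0 [:: A1].
      apply/IH1 => //; rewrite fsetU0.
      exact: @ax0 C _ _ _ (or_intror erefl : C (mkRule [::] (fset0, [fset alpha A1]))) erefl erefl.
    have := H C HBC fset0 HC1; rewrite fset0U => /IH2 -/(_ HBC) /(deduction HST).
    move=> Hd.
    exact: @mix1 B _ _ _ _ (HU _ (@U_Rimp S0 alpha A1 A2 fset0 _ HA)) erefl erefl Hd.
  + move=> C HC Th' /(IH1 _ _ HC) Ha; apply/IH2 => //.
    have HSTC : forall r, ST r -> C r by move=> r h; apply: HC; apply: HST.
    have P2 : derivable B (alpha A2 |` fset0, [fset alpha A2]).
      by apply: der_sub (der_init HST (alpha A2) fset0 fset0) _ _; fsub.
    have Hl := @mix2 C _ _ _ _ _ (HC _ (HU _ (@U_Limp S0 alpha A1 A2 fset0 Th' fset0 [fset alpha A2] HA)))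
       erefl erefl Ha (der_base HC P2).
    apply: der_sub (der_cut HSTC (der_base HC H) Hl) _ _; fsub.
Qed.

End Main.

Theorem lemma5 (Gm Dl : seq form) (alpha : form -> atom)
  (Halpha : atomic_mapping (Gm ++ Dl) alpha)
  (Th : {fset atom}) (Sg : seq form)
  (HSne : Sg <> [::])
  (HSsub : forall A, A \in Sg -> A \in subformulas_of (Gm ++ Dl))
  (B : base) (HB : extends (UST (subformulas_of (Gm ++ Dl)) alpha) B) :
  supports B Th Sg <->
  derivable B (fset0, [fset p | p in map alpha Sg] `|` Th).
Proof.
have Hat : forall p, Atom p \in subformulas_of (Gm ++ Dl) -> alpha (Atom p) = p.
  by move=> p; apply: Halpha.2.
exact: (@main (subformulas_of (Gm ++ Dl)) alpha Hat (@subof_cl _) (Defs.lsize Sg) Sg B Th (leqnn _) HSsub HB).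
Qed.
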